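(* Let $\mathcal M$ be a finite polyptych lattice over $F$ and let $\mathcal C$ be a maximal-dimensional cone of $\Sigma(\mathcal M)$. If $p,q\in\mathrm{Sp}(\mathcal M)$ satisfy $p(m)=q(m)$ for all $m\in\mathcal C\cap\mathcal M$, then $p=q$. Likewise, if $p,q\in\mathrm{Sp}_{\mathbb R}(\mathcal M)$ agree on $\mathcal C$, then $p=q$.
   Context: Fix a subring $F$ with $\mathbb Z\subseteq F\subseteq\mathbb R$. A map $\psi:M\to M'$ between finite-rank free $F$-modules is piecewise $F$-linear if it is continuous and there is a complete fan of $F$-rational polyhedral cones in $M\otimes_F\mathbb R$ with $\psi$ $F$-linear on each cone. A polyptych lattice of rank $r$ over $F$ is a collection $\{M_\alpha\}_{\alpha\in I}$ of free $F$-modules of rank $r$ with piecewise $F$-linear maps $\mu_{\alpha,\beta}:M_\alpha\to M_\beta$ for all $\alpha,\beta$ with $\mu_{\alpha,\alpha}=\mathrm{id}$, $\mu_{\alpha,\beta}=\mu_{\beta,\alpha}^{-1}$, $\mu_{\beta,\gamma}\circ\mu_{\alpha,\beta}=\mu_{\alpha,\gamma}$; finite if $I$ is finite. Its elements are classes of $\bigsqcup M_\alpha$ under $m_\alpha\sim\mu_{\alpha,\beta}(m_\alpha)$; $\pi_\alpha$ is the chart map to $M_\alpha$; $\mathcal M_{\mathbb R}$ is obtained by tensoring charts with $\mathbb R$. $m+_\alpha m':=\pi_\alpha^{-1}(\pi_\alpha(m)+\pi_\alpha(m'))$, $\lambda m:=\pi_\alpha^{-1}(\lambda\pi_\alpha(m))$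 for $\lambda\ge0$. $\Sigma(\mathcal M)$ is the coarsest complete fan of cones in $\mathcal M_{\mathbb R}$ (sets whose chart images are $F$-rational polyhedral cones) on whose chart images all mutations are linear. A point is $p:\mathcal M\to F$ with $p(m)+p(m')=\min_{\alpha}p(m+_\alpha m')$ and $p(\lambda m)=\lambda p(m)$ ($\lambda\in F_{\ge0}$); $\mathrm{Sp}(\mathcal M)$ is the set of points and $\mathrm{Sp}_{\mathbb R}(\mathcal M)$ the set of points of $\mathcal M_{\mathbb R}$. *)

(* Defs.v *)
From HB Require Import structures.
From mathcomp Require Import all_boot all_order all_algebra.
From mathcomp Require Import all_classical all_reals all_analysis.
Set Implicit Arguments. Unset Strict Implicit. Unset Printing Implicit Defensive.
Import Order.TTheory GRing.Theory Num.Theory.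
Import numFieldNormedType.Exports.
Local Open Scope classical_set_scope.
Local Open Scope ring_scope.

Section PolyptychDefs.
Variables (R : realType) (F : subringClosed R) (r : nat).

Notation vec := 'cV[R]_r.

(** the chart module M_alpha = F^r inside M_alpha (x) R = R^r *)
Definition Fvec (v : vec) : Prop := forall i, v i 0 \in F.
Definition Fmx (A : 'M[R]_r) : Prop := forall i j, A i j \in F.

Lemma FvecD (u v : vec) : Fvec u -> Fvec v -> Fvec (u + v).
Proof. by move=> hu hv i; rewrite mxE rpredD. Qed.

Lemma FvecZ (l : R) (v : vec) : l \in F -> Fvec v -> Fvec (l *: v).
Proof. by move=> hl hv i; rewrite mxE rpredM. Qed.

Lemma Fmx_mul (A : 'M[R]_r) (v : vec) : Fmx A -> Fvec v -> Fvec (A *m v).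
Proof.
move=> hA hv i; rewrite mxE; apply: rpred_sum => j _; exact: rpredM.
Qed.

Definition Fcone (S : set vec) : Prop :=
  exists gens : seq vec, (forall g, g \in gens -> Fvec g) /\
    S = [set v | exists c : 'I_(size gens) -> R,
                   (forall i, 0 <= c i) /\ v = \sum_i c i *: gens`_i].

Definition dotv (u x : vec) : R := \sum_i u i 0 * x i 0.

Definition face (S T : set vec) : Prop :=
  exists u : vec, (forall x, S x -> 0 <= dotv u x) /\
    T = [set x | S x /\ dotv u x = 0].

Definition isFan (Sig : set (set vec)) : Prop :=
  [/\ finite_set Sig,
      (forall s, Sig s -> Fcone s),
      (forall s t, Sig s -> face s t -> Sig t) &
      (forall s t, Sig s -> Sig t -> face s (s `&` t) /\ face t (s `&` t))].

Definition complete_fan (Sig : set (set vec)) : Prop :=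
  isFan Sig /\ (forall x, exists s, Sig s /\ s x).

Definition pl (f : vec -> vec) : Prop :=
  continuous f /\
  exists Sig, complete_fan Sig /\
    forall s, Sig s -> exists A : 'M[R]_r, Fmx A /\ forall x, s x -> f x = A *m x.

Lemma pl_Fvec f v : pl f -> Fvec v -> Fvec (f v).
Proof.
move=> [_ [Sig [[_ Sx] hS]]] hv; have [s [Ss sv]] := Sx v.
have [A [hA ->]] := hS s Ss; [exact: Fmx_mul | exact: sv].
Qed.

End PolyptychDefs.

(** a finite polyptych lattice of rank r over F, indexed by the finite type I;
    the chart M_alpha is identified with F^r (and M_alpha (x) R with R^r). *)
Record polyptych (R : realType) (F : subringClosed R) (r : nat) (I : finType) :=
  Polyptych {
    mu : I -> I -> 'cV[R]_r -> 'cV[R]_r;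
    mu_id : forall a, mu a a =1 id;
    mu_inv : forall a b, cancel (mu a b) (mu b a);
    mu_comp : forall a b c, mu b c \o mu a b =1 mu a c;
    mu_pl : forall a b, pl F (mu a b) }.

Section Elements.
Variables (R : realType) (F : subringClosed R) (r : nat) (I : finType)
          (L : polyptych F r I).
Notation vec := 'cV[R]_r.

(** elements of M_R: equivalence classes, represented by their (unique)
    representatives in every chart *)
Record MR := MkMR {
  crd : I -> vec;
  crd_compat : forall a b, crd b = mu L a b (crd a) }.

(** elements of M : classes of elements of the charts M_alpha = F^r *)
Definition inM (m : MR) : Prop := forall a, Fvec F (crd m a).
Record Melt := MkM { mval :> MR; mvalP : inM mval }.

Definition chart_inv (a : I) (v : vec) : MR.
Proof.
refine (@MkMR (fun b => mu L a b v) _).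
move=> b c; by rewrite -(mu_comp L a b c).
Defined.

Lemma chart_inv_M (a : I) (v : vec) : Fvec F v -> inM (chart_inv a v).
Proof. move=> hv b /=; apply: pl_Fvec hv; exact: mu_pl. Qed.

Definition chart_invM (a : I) (v : vec) (hv : Fvec F v) : Melt :=
  MkM (chart_inv_M a hv).

Definition addR (a : I) (m m' : MR) : MR := chart_inv a (crd m a + crd m' a).
Definition scaleR (a : I) (l : R) (m : MR) : MR := chart_inv a (l *: crd m a).

Definition addM (a : I) (m m' : Melt) : Melt :=
  chart_invM a (FvecD (mvalP m a) (mvalP m' a)).
Definition scaleM (a : I) (l : R) (hl : l \in F) (m : Melt) : Melt :=
  chart_invM a (FvecZ hl (mvalP m a)).

Definition isPoint (p : Melt -> R) : Prop :=
  [/\ (forall m, p m \in F),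
      (forall m m', (forall a, p m + p m' <= p (addM a m m')) /\
                    (exists a, p m + p m' = p (addM a m m'))) &
      (forall a l (hl : l \in F) m, 0 <= l -> p (scaleM a hl m) = l * p m)].

Definition Sp : set (Melt -> R) := [set p | isPoint p].

Definition isPointR (p : MR -> R) : Prop :=
  (forall m m', (forall a, p m + p m' <= p (addR a m m')) /\
                (exists a, p m + p m' = p (addR a m m'))) /\
  (forall a l m, 0 <= l -> p (scaleR a l m) = l * p m).

Definition SpR : set (MR -> R) := [set p | isPointR p].

Definition chartim (a : I) (C : set MR) : set vec := (fun m => crd m a) @` C.

Definition admissible_fan (Sig : set (set MR)) : Prop :=
  [/\ finite_set Sig,
      (forall a, complete_fan F (chartim a @` Sig)),
      (forall x : MR, exists C, Sig C /\ C x) &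
      (forall C, Sig C -> forall a b, exists A : 'M[R]_r,
           forall v, chartim a C v -> mu L a b v = A *m v)].

Definition is_Sigma (Sig : set (set MR)) : Prop :=
  admissible_fan Sig /\
  forall Sig', admissible_fan Sig' ->
    forall C', Sig' C' -> exists C, Sig C /\ C' `<=` C.

Definition lin_span (S : set vec) : set vec :=
  [set v | exists (n : nat) (g : 'I_n -> vec) (c : 'I_n -> R),
             (forall i, S (g i)) /\ v = \sum_i c i *: g i].

Definition full_dim (C : set MR) : Prop :=
  exists a, lin_span (chartim a C) = setT.

End Elements.

(* Main.v *)
Require Import Defs.
From HB Require Import structures.
From mathcomp Require Import all_boot all_order all_algebra.
From mathcomp Require Import all_classical all_reals all_analysis.
From mathcomp Require Import lra.
Import Order.TTheory GRing.Theory Num.Theory.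
Local Open Scope classical_set_scope.
Local Open Scope ring_scope.
Set Implicit Arguments. Unset Strict Implicit.

Section Cone.
Variables (R : realType) (r : nat).
Notation vec := 'cV[R]_r.
Variables (gens : seq vec) (S : set vec).
Hypothesis hS : S = [set v | exists c : 'I_(size gens) -> R,
                   (forall i, 0 <= c i) /\ v = \sum_i c i *: gens`_i].

Lemma cone_comb (c : 'I_(size gens) -> R) : (forall i, 0 <= c i) -> S (\sum_i c i *: gens`_i).
Proof. by move=> hc; rewrite hS; exists c. Qed.

Lemma cone0 : S 0.
Proof.
rewrite hS; exists (fun=> 0); split=> //.
by rewrite big1 // => i _; rewrite scale0r.
Qed.

Lemma cone_add u v : S u -> S v -> S (u + v).
Proof.
rewrite hS => -[c [hc ->]] [c' [hc' ->]].
exists (fun i => c i + c' i); split; first by move=> i; rewrite addr_ge0.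
by rewrite -big_split /=; apply: eq_bigr => i _; rewrite scalerDl.
Qed.

Lemma cone_scale l u : 0 <= l -> S u -> S (l *: u).
Proof.
move=> hl; rewrite hS => -[c [hc ->]].
exists (fun i => l * c i); split; first by move=> i; rewrite mulr_ge0.
by rewrite scaler_sumr; apply: eq_bigr => i _; rewrite scalerA.
Qed.

Lemma cone_sum (J : finType) (f : J -> vec) : (forall j, S (f j)) -> S (\sum_j f j).
Proof. move=> h; apply: (big_ind S) => //; [exact: cone0 | exact: cone_add]. Qed.

Lemma cone_span : lin_span S = setT ->
  forall w, exists e : 'I_(size gens) -> R, w = \sum_i e i *: gens`_i.
Proof.
move=> hsp w.
have : lin_span S w by rewrite hsp.
move=> [n [g [c [hg ->]]]].
have hD : forall j, exists d : 'I_(size gens) -> R,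
    (forall i, 0 <= d i) /\ g j = \sum_i d i *: gens`_i.
  by move=> j; have := hg j; rewrite hS.
have [D hD'] := choice hD.
exists (fun i => \sum_j c j * D j i).
under eq_bigr => j _ do rewrite (hD' j).2 scaler_sumr.
rewrite exchange_big /=; apply: eq_bigr => i _.
by rewrite scaler_suml; apply: eq_bigr => j _; rewrite scalerA.
Qed.

End Cone.

Section Main.
Variables (R : realType) (F : subringClosed R) (r : nat)
  (I : finType) (L : polyptych F r I)
  (Sig : set (set (MR L))) (C : set (MR L)).
Hypotheses (hSig : is_Sigma Sig) (hC : Sig C) (hfull : full_dim C).
Notation vec := 'cV[R]_r.

Lemma MR_ext (x y : MR L) : crd x =1 crd y -> x = y.
Proof.
case: x => cx hx; case: y => cy hy /= h.
have E : cx = cy := funext h.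
subst; congr MkMR; exact: Prop_irrelevance.
Qed.

Lemma sat (x : MR L) b : chartim b C (crd x b) -> C x.
Proof.
move=> [y Cy e]; suff -> : x = y by [].
apply: MR_ext => a.
by rewrite (crd_compat x b a) (crd_compat y b a) e.
Qed.

Lemma inS (y : MR L) b : C y -> chartim b C (crd y b).
Proof. by move=> Cy; exists y. Qed.

Lemma hcone b : Fcone F (chartim b C).
Proof.
case: hSig => [[_ hfan _ _] _]; have [[_ hc _ _] _] := hfan b.
by apply: hc; exists C.
Qed.

Lemma hlin a b : exists A : 'M[R]_r,
  forall v, chartim a C v -> mu L a b v = A *m v.
Proof. case: hSig => [[_ _ _ h] _]; exact: h. Qed.

Lemma span_all b : lin_span (chartim b C) = setT.
Proof.
have [a1 hsp] := hfull.
have [A hA] := hlin a1 b.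
have [B hB] := hlin b a1.
have hBA : forall v, chartim a1 C v -> (B *m A) *m v = v.
  move=> v hv; rewrite -mulmxA -hA //.
  have [y Cy <-] := hv.
  rewrite -(crd_compat y a1 b) -hB; last exact: inS.
  by rewrite (crd_compat y a1 b) mu_inv.
have hBA' : forall w : vec, (B *m A) *m w = w.
  move=> w; have : lin_span (chartim a1 C) (w : vec) by rewrite hsp.
  move=> [n [g [c [hg ->]]]].
  rewrite mulmx_sumr; apply: eq_bigr => j _.
  by rewrite -scalemxAr hBA.
have e1 : B *m A = 1%:M.
  apply/matrixP => i j.
  have := hBA' (delta_mx j 0); rewrite -colE => /(congr1 (fun M : vec => M i 0)).
  by rewrite !mxE eqxx andbT.
have e2 : A *m B = 1%:M by apply: mulmx1C.
apply/seteqP; split => // w _.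
have : lin_span (chartim a1 C) (B *m w) by rewrite hsp.
move=> [n [g [c [hg hw]]]].
exists n, (fun j => A *m g j), c; split.
  move=> j; have [y Cy <-] := hg j.
  by rewrite -hA; [rewrite -crd_compat; exact: inS | exact: inS].
by rewrite -[w]mul1mx -e2 -mulmxA hw mulmx_sumr; apply: eq_bigr => j _;
  rewrite scalemxAr.
Qed.

Lemma keyK (x : MR L) :
  exists c' : MR L, [/\ C c', inM c' & forall b, C (addR b x c')].
Proof.
have [a0 _] := hfull.
have [G hG] := choice hcone.
pose sg b := \sum_(i < size (G b)) (G b)`_i.
have Ssg b : chartim b C (sg b).
  have -> : sg b = \sum_(i < size (G b)) 1 *: (G b)`_i by apply: eq_bigr => i _; rewrite scale1r.
  exact: (cone_comb (hG b).2 (c:=fun=> 1) (fun=> ler01)).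
have Fsg b : Fvec F (sg b).
  move=> k; rewrite summxE; apply: rpred_sum => i _; apply: (hG b).1.
  exact: mem_nth.
pose cb b := chart_inv L b (sg b).
have crdcb b : crd (cb b) b = sg b by exact: mu_id.
have Ccb b : C (cb b) by apply: (sat (b:=b)); rewrite crdcb.
pose dv := \sum_b crd (cb b) a0.
have Sdv : chartim a0 C dv by apply: (cone_sum (hG a0).2) => b; exact: inS.
have Fdv : Fvec F dv.
  move=> k; rewrite summxE; apply: rpred_sum => b _.
  exact: (chart_inv_M L b (Fsg b) a0 k).
pose d := chart_inv L a0 dv.
have crdda : crd d a0 = dv by exact: mu_id.
have Cd : C d by apply: (sat (b:=a0)); rewrite crdda.
have crdd b : crd d b = \sum_b' crd (cb b') b.
  have [A hA] := hlin a0 b.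
  have -> : crd d b = mu L a0 b dv by [].
  rewrite hA // mulmx_sumr; apply: eq_bigr => b' _.
  rewrite -hA; last exact: inS.
  by rewrite (crd_compat (cb b') a0 b).
have hN b : exists N : nat, forall N' : nat, (N <= N')%N ->
    chartim b C (crd x b + N'%:R *: crd d b).
  have [e he] := cone_span (hG b).2 (span_all b) (crd x b).
  have s0 : 0 <= \sum_i `|e i| by apply: sumr_ge0 => i _.
  exists (Num.Def.archi_bound (\sum_i `|e i|)) => N' hN'.
  have hle i : - e i <= N'%:R.
    have h1 := ler_norm (- e i); rewrite normrN in h1.
    have h2 : `|e i| <= \sum_i `|e i|.
      by rewrite (bigD1 i) //= lerDl; apply: sumr_ge0 => j _.
    have h3 := archi_boundP s0.
    have h4 : (Num.Def.archi_bound (\sum_i `|e i|))%:R <= N'%:R :> R.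
      by rewrite ler_nat.
    lra.
  rewrite crdd (bigD1 b) // crdcb scalerDr addrA.
  apply: (cone_add (hG b).2); last first.
    apply: (cone_scale (hG b).2); first exact: ler0n.
    apply: (big_ind (chartim b C)); [exact: (cone0 (hG b).2) |
      exact: (cone_add (hG b).2) | move=> b' _; exact: inS].
  have -> : crd x b + N'%:R *: sg b = \sum_(i < size (G b)) (e i + N'%:R) *: (G b)`_i.
    rewrite he /sg scaler_sumr -big_split; apply: eq_bigr => i _.
    by rewrite scalerDl.
  apply: (cone_comb (hG b).2) => i; have := hle i; lra.
have [Nf hNf] := choice hN.
pose N := (\max_b Nf b)%N.
pose c' := chart_inv L a0 (N%:R *: crd d a0).
have Sc : chartim a0 C (N%:R *: crd d a0).
  by apply: (cone_scale (hG a0).2); [exact: ler0n | exact: inS].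
exists c'; split.
- apply: (sat (b:=a0)); change (chartim a0 C (mu L a0 a0 (N%:R *: crd d a0))).
  by rewrite mu_id.
- apply: chart_inv_M; apply: FvecZ; first exact: rpred_nat.
  by rewrite crdda.
- move=> b; apply: (sat (b:=b)).
  change (chartim b C (mu L b b (crd x b + crd c' b))); rewrite mu_id.
  have -> : crd c' b = N%:R *: crd d b.
    have [A hA] := hlin a0 b.
    have -> : crd c' b = mu L a0 b (N%:R *: crd d a0) by [].
    rewrite hA // -scalemxAr -hA; last exact: inS.
    by rewrite (crd_compat d a0 b).
  by apply: hNf; exact: leq_bigmax.
Qed.

End Main.

Theorem mainTheorem2 (R : realType) (F : subringClosed R) (r : nat)
  (I : finType) (L : polyptych F r I)
  (Sig : set (set (MR L))) (C : set (MR L)) :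
  is_Sigma Sig -> Sig C -> full_dim C ->
  (forall p q : Melt L -> R, Sp p -> Sp q ->
     (forall m : Melt L, C (mval m) -> p m = q m) -> p = q) /\
  (forall p q : MR L -> R, SpR p -> SpR q ->
     (forall x : MR L, C x -> p x = q x) -> p = q).
Proof.
move=> hSig hC hfull; split.
- have le : forall p q : Melt L -> R,
    (forall m m', (forall a, p m + p m' <= p (addM a m m')) /\
                  (exists a, p m + p m' = p (addM a m m'))) ->
    (forall m m', (forall a, q m + q m' <= q (addM a m m')) /\
                  (exists a, q m + q m' = q (addM a m m'))) ->
    (forall m : Melt L, C (mval m) -> p m = q m) -> forall m, q m <= p m.
    move=> p q hp hq h m.
    have [c' [Cc' ic' hb]] := keyK hSig hC hfull (mval m).
    pose cM := MkM ic'.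
    have [_ [b eb]] := hp m cM.
    have [hqa _] := hq m cM.
    have e1 : p cM = q cM := h cM Cc'.
    have e2 : p (addM b m cM) = q (addM b m cM) := h (addM b m cM) (hb b).
    have := hqa b; rewrite -e1 -e2 -eb.
    by rewrite lerD2r.
  move=> p q [_ hp _] [_ hq _] hpq; apply: funext => m; apply/le_anti.
  rewrite !le //; move=> m' hm'; exact/esym/hpq.
- have le : forall p q : MR L -> R,
    (forall m m', (forall a, p m + p m' <= p (addR a m m')) /\
                  (exists a, p m + p m' = p (addR a m m'))) ->
    (forall m m', (forall a, q m + q m' <= q (addR a m m')) /\
                  (exists a, q m + q m' = q (addR a m m'))) ->
    (forall m : MR L, C m -> p m = q m) -> forall m, q m <= p m.
    move=> p q hp hq h m.
    have [c' [Cc' ic' hb]] := keyK hSig hC hfull m.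
    have [_ [b eb]] := hp m c'.
    have [hqa _] := hq m c'.
    have e1 : p c' = q c' := h c' Cc'.
    have e2 : p (addR b m c') = q (addR b m c') := h _ (hb b).
    have := hqa b; rewrite -e1 -e2 -eb.
    by rewrite lerD2r.
  move=> p q [hp _] [hq _] hpq; apply: funext => m; apply/le_anti.
  rewrite !le //; move=> m' hm'; exact/esym/hpq.
Qed.
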